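(* Let $M$ be a finite $\Sigma$-Rickart right $R$-module and $S=\mathrm{End}_R(M)$. Then (i) $S$ is a right semi-hereditary ring; (ii) $S$ is a right coherent ring; (iii) every finitely $M$-generated submodule of $M$ is $M$-coherent.
   Context: $M^{(n)}$ is the direct sum of $n$ copies of $M$. $M$ is Rickart if $\ker\varphi$ is a direct summand of $M$ for all $\varphi\in\mathrm{End}_R(M)$; $M$ is finite $\Sigma$-Rickart if $M^{(n)}$ is Rickart for all $n>0$. A ring is right semi-hereditary if every finitely generated right ideal is projective, and right coherent if every finitely generated right ideal is finitely presented. A module $N$ is finitely $M$-generated if there is an epimorphism $M^{(n)}\to N$ for some $n>0$; such an $N$ is $M$-coherent if for every $n>0$ and every homomorphism $\rho:M^{(n)}\to N$, $\ker\rho$ is finitely $M$-generated. *)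

(* Defs.v *)
From HB Require Import structures.
From mathcomp Require Import all_boot all_order all_algebra.
From mathcomp Require Import boolp.
Set Implicit Arguments.
Unset Strict Implicit.
Unset Printing Implicit Defensive.
Import GRing.Theory.
Local Open Scope ring_scope.

(* A right R-module is modelled as a left module over the ring R       *)
(* (equivalently a left R^op-module).                    *)

Definition is_hom (R : pzRingType) (U V : lmodType R) (f : U -> V) : Prop :=
  (forall x y, f (x + y) = f x + f y) /\ (forall (a : R) x, f (a *: x) = a *: f x).

Definition is_submodule (R : pzRingType) (X : lmodType R) (N : X -> Prop) : Prop :=
  [/\ N 0, (forall x y, N x -> N y -> N (x + y)) & (forall (a : R) x, N x -> N (a *: x))].

Definition is_direct_summand (R : pzRingType) (X : lmodType R) (N : X -> Prop) : Prop :=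
  exists C : X -> Prop, [/\ is_submodule C,
    (forall x, N x -> C x -> x = 0) &
    (forall x, exists k c, [/\ N k, C c & x = k + c])].

Notation dsum M n := {ffun 'I_n -> M}.

Definition rickart (R : pzRingType) (M : lmodType R) : Prop :=
  forall phi : M -> M, is_hom phi -> is_direct_summand (fun x => phi x = 0).

Definition fin_sigma_rickart (R : pzRingType) (M : lmodType R) : Prop :=
  forall n : nat, (0 < n)%N -> rickart (dsum M n).

Definition fin_M_generated (R : pzRingType) (M X : lmodType R) (N : X -> Prop) : Prop :=
  exists n : nat, (0 < n)%N /\
    exists rho : dsum M n -> X,
      [/\ is_hom rho, (forall v, N (rho v)) & (forall x, N x -> exists v, rho v = x)].

Definition M_coherent (R : pzRingType) (M X : lmodType R) (N : X -> Prop) : Prop :=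
  fin_M_generated M N /\
  forall n : nat, (0 < n)%N -> forall rho : dsum M n -> X,
    is_hom rho -> (forall v, N (rho v)) ->
    fin_M_generated M (fun v : dsum M n => rho v = 0).

(* (f * g) x = f (g x), i.e. endomorphisms act on the left of M.       *)
Section EndRing.
Variables (R : pzRingType) (M : lmodType R).

Record endo := Endo { efun :> M -> M; efunP : is_hom efun }.

HB.instance Definition _ := gen_eqMixin endo.
HB.instance Definition _ := gen_choiceMixin endo.

Lemma endo_ext (f g : endo) : (forall x, f x = g x) -> f = g.
Proof.
case: f g => f fP [g gP] /= efg.
have E : f = g by apply: funext.
subst g; congr Endo; exact: Prop_irrelevance.
Qed.

Fact zero_hom : is_hom (fun _ : M => (0 : M)).
Proof. by split=> *; rewrite ?addr0 ?scaler0. Qed.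
Fact add_hom (f g : endo) : is_hom (fun x => f x + g x).
Proof.
case: f g => f [f1 f2] [g [g1 g2]]; split=> /= *.
  by rewrite f1 g1 addrACA.
by rewrite f2 g2 scalerDr.
Qed.
Fact opp_hom (f : endo) : is_hom (fun x => - f x).
Proof. case: f => f [f1 f2]; split=> /= *; by rewrite ?f1 ?f2 ?opprD ?scalerN. Qed.
Fact one_hom : is_hom (fun x : M => x).
Proof. by []. Qed.
Fact mul_hom (f g : endo) : is_hom (fun x => f (g x)).
Proof. case: f g => f [f1 f2] [g [g1 g2]]; split=> /= *; by rewrite ?g1 ?f1 ?g2 ?f2. Qed.

Definition e0 := Endo zero_hom.
Definition eadd f g := Endo (add_hom f g).
Definition eopp f := Endo (opp_hom f).
Definition e1 := Endo one_hom.
Definition emul f g := Endo (mul_hom f g).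

Fact eaddA : associative eadd.
Proof. by move=> f g h; apply: endo_ext => x /=; rewrite addrA. Qed.
Fact eaddC : commutative eadd.
Proof. by move=> f g; apply: endo_ext => x /=; rewrite addrC. Qed.
Fact eadd0 : left_id e0 eadd.
Proof. by move=> f; apply: endo_ext => x /=; rewrite add0r. Qed.
Fact eaddN : left_inverse e0 eopp eadd.
Proof. by move=> f; apply: endo_ext => x /=; rewrite addNr. Qed.

HB.instance Definition _ := GRing.isZmodule.Build endo eaddA eaddC eadd0 eaddN.

Fact emulA : associative emul.
Proof. by move=> f g h; apply: endo_ext. Qed.
Fact emul1 : left_id e1 emul.
Proof. by move=> f; apply: endo_ext. Qed.
Fact emulr1 : right_id e1 emul.
Proof. by move=> f; apply: endo_ext. Qed.
Fact emulDl : left_distributive emul +%R.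
Proof. by move=> f g h; apply: endo_ext. Qed.
Fact emulDr : right_distributive emul +%R.
Proof.
move=> f g h; apply: endo_ext => x /=.
by case: f => f [f1 f2] /=; rewrite f1.
Qed.

HB.instance Definition _ := GRing.Zmodule_isPzRing.Build endo
  emulA emul1 emulr1 emulDl emulDr.

End EndRing.

Notation End_ring M := (endo M).

(* Right S-modules are left modules over the converse ring S^c.        *)

Definition is_right_ideal (S : pzRingType) (I : S -> Prop) : Prop :=
  [/\ I 0, (forall x y, I x -> I y -> I (x + y)), (forall x, I x -> I (- x))
    & (forall x s, I x -> I (x * s))].

Definition generates_right_ideal (S : pzRingType) (I : S -> Prop) n (g : 'I_n -> S) : Prop :=
  (forall i, I (g i)) /\
  (forall x, I x -> exists s : 'I_n -> S, x = \sum_(i < n) g i * s i).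

Definition fg_right_ideal (S : pzRingType) (I : S -> Prop) : Prop :=
  exists n (g : 'I_n -> S), generates_right_ideal I g.

Definition rscale (S : pzRingType) (B : lmodType S^c) (b : B) (s : S) : B :=
  @GRing.scale S^c B s b.

(* g : I -> B (given as a function on S, only its values on I matter)
   is a homomorphism of right S-modules *)
Definition is_hom_on_ideal (S : pzRingType) (I : S -> Prop) (B : lmodType S^c)
    (g : S -> B) : Prop :=
  (forall x y, I x -> I y -> g (x + y) = g x + g y) /\
  (forall x s, I x -> g (x * s) = rscale (g x) s).

Definition is_hom_right (S : pzRingType) (A B : lmodType S^c) (p : A -> B) : Prop :=
  (forall x y, p (x + y) = p x + p y) /\ (forall x s, p (rscale x s) = rscale (p x) s).

Definition projective_right_ideal (S : pzRingType) (I : S -> Prop) : Prop :=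
  forall (A B : lmodType S^c) (p : A -> B),
    is_hom_right p -> (forall b, exists a, p a = b) ->
    forall g : S -> B, is_hom_on_ideal I g ->
    exists h : S -> A, is_hom_on_ideal I h /\ (forall x, I x -> p (h x) = g x).

(* The right ideal I is finitely presented: there is an exact sequence
   S^m -> S^n -> I -> 0, i.e. I has finitely many generators g whose
   relation module {s in S^n | sum g_i s_i = 0} is finitely generated. *)
Definition fp_right_ideal (S : pzRingType) (I : S -> Prop) : Prop :=
  exists n (g : 'I_n -> S), generates_right_ideal I g /\
    exists m (k : 'I_m -> 'I_n -> S),
      (forall j, \sum_(i < n) g i * k j i = 0) /\
      (forall s : 'I_n -> S, \sum_(i < n) g i * s i = 0 ->
         exists t : 'I_m -> S, forall i, s i = \sum_(j < m) k j i * t j).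

Definition right_semihereditary (S : pzRingType) : Prop :=
  forall I : S -> Prop, is_right_ideal I -> fg_right_ideal I -> projective_right_ideal I.

Definition right_coherent (S : pzRingType) : Prop :=
  forall I : S -> Prop, is_right_ideal I -> fg_right_ideal I -> fp_right_ideal I.

(* Main.v *)
Require Import Defs.
From HB Require Import structures.
From mathcomp Require Import all_boot all_order all_algebra.
From mathcomp Require Import boolp.
Set Implicit Arguments.
Unset Strict Implicit.
Import GRing.Theory.
Local Open Scope ring_scope.

Lemma sub_opp (R : pzRingType) (X : lmodType R) (K : X -> Prop) :
  is_submodule K -> forall x, K x -> K (- x).
Proof. by case=> _ _ Ks x Kx; rewrite -scaleN1r; apply: Ks. Qed.

Lemma proj_summand (R : pzRingType) (X : lmodType R) (K : X -> Prop) :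
  is_submodule K -> is_direct_summand K ->
  exists e : X -> X, [/\ is_hom e, forall x, K (e x) & forall x, K x -> e x = x].
Proof.
move=> sK [C [sC KC dec]].
have [f Hf] : exists f : X -> X, forall x, K (f x) /\ C (x - f x).
  suff [f Hf] : {f : X -> X & forall x, K (f x) /\ C (x - f x)} by exists f.
  apply: (@choice X X (fun x y => K y /\ C (x - y))) => x.
  have [k [c [Kk Cc ->]]] := dec x; exists k; split=> //.
  by rewrite addrC addKr.
have uniq x k c : K k -> C c -> x = k + c -> f x = k.
  move=> Kk Cc ->; have [Kf Cf] := Hf (k + c).
  apply/eqP; rewrite -subr_eq0; apply/eqP; apply: KC.
    have [_ sKD _] := sK; apply: sKD => //; exact: sub_opp.
  have -> : f (k + c) - k = c - (k + c - f (k + c)).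
    by rewrite [k + c]addrC opprB addrA opprD addrACA subrr add0r.
  have [_ sCD _] := sC; apply: sCD => //; exact: sub_opp.
exists f; split.
- split.
  + move=> x y; apply: (uniq _ _ ((x - f x) + (y - f y))).
    * have [_ sKD _] := sK; apply: sKD; [exact: (Hf x).1|exact: (Hf y).1].
    * have [_ sCD _] := sC; apply: sCD; [exact: (Hf x).2|exact: (Hf y).2].
    * by rewrite addrACA !subrKC.
  + move=> a x; apply: (uniq _ _ (a *: (x - f x))).
    * by have [_ _ sKs] := sK; apply: sKs; exact: (Hf x).1.
    * by have [_ _ sCs] := sC; apply: sCs; exact: (Hf x).2.
    * by rewrite -scalerDr subrKC.
- by move=> x; exact: (Hf x).1.
- move=> x Kx; apply: (uniq _ _ 0) => //; last by rewrite addr0.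
  by case: sC.
Qed.

Lemma ker_submodule (R : pzRingType) (X Y : lmodType R) (f : X -> Y) :
  is_hom f -> is_submodule (fun x => f x = 0).
Proof.
move=> [fD fZ]; have f0 : f 0 = 0.
  by apply/eqP; rewrite -(addrI (f 0) (_ : f 0 + f 0 = f 0 + 0)) // -fD !addr0.
split=> //; first by move=> x y fx fy; rewrite fD fx fy addr0.
by move=> a x fx; rewrite fZ fx scaler0.
Qed.

Lemma ker_proj (R : pzRingType) (M : lmodType R) n (psi : dsum M n -> M) :
  (0 < n)%N -> rickart (dsum M n) -> is_hom psi ->
  exists e : dsum M n -> dsum M n,
    [/\ is_hom e, forall v, psi (e v) = 0 & forall v, psi v = 0 -> e v = v].
Proof.
move=> n0 rick hpsi; pose i0 : 'I_n := Ordinal n0.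
pose phi (v : dsum M n) : dsum M n := [ffun i => if i == i0 then psi v else 0].
have phiE v : (phi v = 0) <-> (psi v = 0).
  split=> [/(congr1 (fun w : dsum M n => w i0))|pv].
    by rewrite /phi ffunE eqxx ffunE.
  by apply/ffunP => i; rewrite /phi !ffunE pv if_same.
have hphi : is_hom phi.
  case: hpsi => pD pZ; split=> [x y|a x]; apply/ffunP => i; rewrite /phi !ffunE.
    by case: ifP => _; rewrite ?pD ?addr0.
  by case: ifP => _; rewrite ?pZ ?scaler0.
have [e [he Ke Kid]] := proj_summand (ker_submodule hphi) (rick phi hphi).
exists e; split=> // v; first by apply/phiE.
by move/phiE; exact: Kid.
Qed.

Lemma hom0 (R : pzRingType) (X Y : lmodType R) (f : X -> Y) : is_hom f -> f 0 = 0.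
Proof. by move=> /ker_submodule; case. Qed.
Lemma hom0' (R : pzRingType) (X Y : lmodType R) (f : X -> Y) : is_hom f -> f 0 = 0.
Proof.
move=> [fD _]; apply/eqP; rewrite -(addrI (f 0) (_ : f 0 + f 0 = f 0 + 0)) //.
by rewrite -fD !addr0.
Qed.

Lemma hom_sum (R : pzRingType) (X Y : lmodType R) (f : X -> Y) n (F : 'I_n -> X) :
  is_hom f -> f (\sum_(i < n) F i) = \sum_(i < n) f (F i).
Proof.
move=> hf; apply: (big_morph f); [exact: hf.1| exact: hom0'].
Qed.

Lemma endo_sumE (R : pzRingType) (M : lmodType R) n (F : 'I_n -> End_ring M) m :
  (\sum_(i < n) F i) m = \sum_(i < n) F i m.
Proof. by apply: (big_morph (fun f : End_ring M => f m)). Qed.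

Lemma endo_hom (R : pzRingType) (M : lmodType R) (f : End_ring M) : is_hom f.
Proof. exact: efunP. Qed.

Lemma mat_exists (R : pzRingType) (M : lmodType R) n (gen : 'I_n -> End_ring M) :
  (0 < n)%N -> rickart (dsum M n) ->
  exists E : 'I_n -> 'I_n -> End_ring M,
    (forall j m, \sum_(i < n) gen i (E i j m) = 0) /\
    (forall w : 'I_n -> M, \sum_(i < n) gen i (w i) = 0 ->
        forall i, w i = \sum_(j < n) E i j (w j)).
Proof.
move=> n0 rick.
pose psi (v : dsum M n) : M := \sum_(i < n) gen i (v i).
have hpsi : is_hom psi.
  split=> [x y|a x]; rewrite /psi.
    by rewrite -big_split; apply: eq_bigr => i _; rewrite ffunE (endo_hom _).1.
  by rewrite scaler_sumr; apply: eq_bigr => i _; rewrite ffunE (endo_hom _).2.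
have [e [he Ke Kid]] := ker_proj n0 rick hpsi.
pose delta (j : 'I_n) (m : M) : dsum M n := [ffun k => if k == j then m else 0].
have hE i j : is_hom (fun m => e (delta j m) i).
  split=> [x y|a x].
    have -> : delta j (x + y) = delta j x + delta j y.
      by apply/ffunP => k; rewrite !ffunE; case: ifP; rewrite ?addr0.
    by rewrite he.1 ffunE.
  have -> : delta j (a *: x) = a *: delta j x.
    by apply/ffunP => k; rewrite !ffunE; case: ifP; rewrite ?scaler0.
  by rewrite he.2 ffunE.
exists (fun i j => Endo (hE i j)); split=> [j m|w pw i] /=.
  exact: (Ke (delta j m)).
have W : [ffun i => w i] = \sum_(j < n) delta j (w j).
  apply/ffunP => k; rewrite sum_ffunE ffunE (bigD1 k) //= ffunE eqxx big1 ?addr0 //.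
  by move=> j /negbTE; rewrite ffunE eq_sym => ->.
have pW : psi [ffun i => w i] = 0.
  by rewrite -pw /psi; apply: eq_bigr => k _; rewrite ffunE.
have := congr1 (fun v : dsum M n => v i) (Kid _ pW).
rewrite ffunE => <-; rewrite {1}W hom_sum // sum_ffunE.
by [].
Qed.

Lemma hom_sub (R : pzRingType) (X Y : lmodType R) (f : X -> Y) x y :
  is_hom f -> f (x - y) = f x - f y.
Proof. by move=> hf; rewrite hf.1 -scaleN1r hf.2 scaleN1r. Qed.

Lemma zmod4 (V : zmodType) (a b a' b' : V) : a - a' = b - b' -> a - b = a' - b'.
Proof.
move=> h; have -> : a = (a - a') + a' by rewrite subrK.
by rewrite h [b - b' + a']addrC -addrA addrAC subrr add0r.
Qed.

Lemma fg_pos (S : pzRingType) (I : S -> Prop) : is_right_ideal I -> fg_right_ideal I ->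
  exists n (g : 'I_n -> S), (0 < n)%N /\ generates_right_ideal I g.
Proof.
move=> [I0 _ _ _] [n [g gg]]; case: n g gg => [|n] g gg; last by exists n.+1, g.
exists 1%N, (fun _ => 0); split=> //; split=> // x /gg.2 [s ->].
by exists (fun _ => 0); rewrite !big_ord0 big_ord1 mulr0.
Qed.

Lemma coherent_part (R : pzRingType) (M : lmodType R) :
  fin_sigma_rickart M -> right_coherent (End_ring M).
Proof.
move=> fsr I rI /(fg_pos rI) [n [g [n0 gg]]].
have [E [Q1 Q2]] := mat_exists g n0 (fsr n n0).
exists n, g; split=> //; exists n, (fun j i => E i j); split.
  move=> j; apply: endo_ext => m; rewrite endo_sumE; exact: Q1.
move=> s hs; exists s => i; apply: endo_ext => m; rewrite endo_sumE /=.
apply: (Q2 (fun i => s i m)).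
by have := congr1 (fun f : End_ring M => f m) hs; rewrite endo_sumE.
Qed.

Lemma part3 (R : pzRingType) (M : lmodType R) :
  fin_sigma_rickart M ->
  forall N : M -> Prop, is_submodule N -> fin_M_generated M N -> M_coherent M N.
Proof.
move=> fsr N _ fg; split=> // n n0 rho hrho _.
have [e [he Ke Kid]] := ker_proj n0 (fsr n n0) hrho.
exists n; split=> //; exists e; split=> // x rx; exists x; exact: Kid.
Qed.

Lemma ideal_hom_sum (S : pzRingType) (I : S -> Prop) (B : lmodType S^c) (gB : S -> B) n
  (F : 'I_n -> S) : is_right_ideal I -> is_hom_on_ideal I gB -> (forall j, I (F j)) ->
  I (\sum_(j < n) F j) /\ gB (\sum_(j < n) F j) = \sum_(j < n) gB (F j).
Proof.
move=> [I0 ID _ _] [gD _] IF.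
have g0 : gB 0 = 0.
  by apply/eqP; rewrite -(addrI (gB 0) (_ : gB 0 + gB 0 = gB 0 + 0)) // -gD ?addr0.
elim/big_rec2: _ => [|j y1 y2 _ [Iy <-]]; first by [].
by split; [exact: ID|rewrite gD].
Qed.

Lemma semihered_part (R : pzRingType) (M : lmodType R) :
  fin_sigma_rickart M -> right_semihereditary (End_ring M).
Proof.
move=> fsr I rI /(fg_pos rI) [n [g [n0 [gI gen]]]].
have [E [Q1 Q2]] := mat_exists g n0 (fsr n n0).
pose cvec (s : 'I_n -> End_ring M) j := s j - \sum_(i < n) E j i * s i.
have cA s s' : \sum_(i < n) g i * s i = \sum_(i < n) g i * s' i -> cvec s = cvec s'.
  move=> hs; apply: funext => j; apply: endo_ext => m; rewrite /cvec /= !endo_sumE /=.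
  apply: zmod4.
  have h : \sum_(i < n) g i (s i m - s' i m) = 0.
    have := congr1 (fun f : End_ring M => f m) hs; rewrite !endo_sumE /= => hs'.
    rewrite (eq_bigr (fun i => g i (s i m) - g i (s' i m))); last first.
      by move=> i _; rewrite hom_sub //; exact: endo_hom.
    by rewrite sumrB hs' subrr.
  rewrite (Q2 _ h j) -sumrB; apply: eq_bigr => i _; apply: hom_sub; exact: endo_hom.
have cB s : \sum_(j < n) g j * cvec s j = \sum_(j < n) g j * s j.
  apply: endo_ext => m; rewrite !endo_sumE /=.
  rewrite (eq_bigr (fun j => g j (s j m) - \sum_(i < n) g j (E j i (s i m)))); last first.
    move=> j _; have hg := endo_hom (g j); rewrite /cvec /= endo_sumE hom_sub // hom_sum //.
  rewrite big_split /= sumrN exchange_big /= [X in _ - X]big1 ?subr0 // => i _; exact: Q1.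
have cC s r j : cvec (fun i => s i * r) j = cvec s j * r.
  by rewrite /cvec mulrBl mulr_suml; congr (_ - _); apply: eq_bigr => i _; rewrite mulrA.
have cD s s' j : cvec (fun i => s i + s' i) j = cvec s j + cvec s' j.
  rewrite /cvec (eq_bigr (fun i => E j i * s i + E j i * s' i)); last by move=> i _; rewrite mulrDr.
  by rewrite big_split /= opprD addrACA.
move=> A B p [pD pZ] psurj gB hgB.
have [sig Hsig] : {sig : End_ring M -> 'I_n -> End_ring M &
    forall x, I x -> x = \sum_(i < n) g i * sig x i}.
  apply: (@choice _ _ (fun x s => I x -> x = \sum_(i < n) g i * s i)) => x.
  case: (pselect (I x)) => [/gen [s ->]|nIx]; first by exists s.
  by exists (fun _ => 0).
have [a Ha] : {a : 'I_n -> A & forall j, p (a j) = gB (g j)}.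
  by apply: (@choice _ _ (fun j a => p a = gB (g j))) => j; exact: psurj.
pose h x := \sum_(j < n) rscale (a j) (cvec (sig x) j).
have p0 : p 0 = 0.
  by apply/eqP; rewrite -(addrI (p 0) (_ : p 0 + p 0 = p 0 + 0)) // -pD ?addr0.
have [I0 ID IN IM] := rI.
exists h; split; first split.
- move=> x y Ix Iy; rewrite /h.
  have -> : cvec (sig (x + y)) = cvec (fun i => sig x i + sig y i).
    apply: cA; rewrite -Hsig; last exact: ID.
    by rewrite (eq_bigr (fun i => g i * sig x i + g i * sig y i)) ?big_split -?Hsig //
      => i _; rewrite mulrDr.
  by rewrite -big_split; apply: eq_bigr => j _; rewrite cD /rscale scalerDl.
- move=> x r Ix; rewrite /h.
  have -> : cvec (sig (x * r)) = cvec (fun i => sig x i * r).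
    apply: cA; rewrite -Hsig; last exact: IM.
    by rewrite {1}(Hsig x Ix) mulr_suml; apply: eq_bigr => i _; rewrite mulrA.
  rewrite /rscale scaler_sumr; apply: eq_bigr => j _; rewrite cC scalerA.
  by [].
- move=> x Ix; rewrite /h (big_morph p pD p0).
  rewrite (eq_bigr (fun j => gB (g j * cvec (sig x) j))); last first.
    by move=> j _; rewrite pZ Ha hgB.2.
  have IF j : I (g j * cvec (sig x) j) by exact: IM.
  rewrite -(ideal_hom_sum rI hgB IF).2.
  by rewrite cB -Hsig.
Qed.

Theorem mainTheorem15 (R : pzRingType) (M : lmodType R) :
  fin_sigma_rickart M ->
  [/\ right_semihereditary (End_ring M),
      right_coherent (End_ring M)
    & forall N : M -> Prop, is_submodule N -> fin_M_generated M N -> M_coherent M N].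
Proof.
move=> fsr; split; [exact: semihered_part|exact: coherent_part|exact: part3].
Qed.
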